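(* Let $\alpha\in(0,1)$, $f=f_{M_1}$, and let $(x_n)$ and $M_0(n)=\frac1n\sum_{j=1}^nM_1(x_j)$ be as in the context. Set $c=e^{\alpha c_1}$ and $w_k=\lfloor c^k\rfloor$. Then there exists $\zeta\in\mathbb R$ such that $$\lim_{k\to\infty}\frac{w_{k+1}}{w_k}=c\qquad\text{and}\qquad\lim_{k\to\infty}M_0(w_k)=\zeta.$$
   Context: $f_{M_1}(x)=x(1+M_1(x)x^\alpha)$ on $[0,1/2]$, $2x-1$ on $(1/2,1]$, with $M_1(x)=C_0\,2^{-\{c_1^{-1}\log x\}}$ ($\{\cdot\}$ fractional part, $\{x\}=\{-x\}$ for $x<0$), $c_1>0$, $C_0$ chosen so $f_{M_1}((1/2)^-)=1$. Discontinuities $s_\ell=e^{-\ell c_1}$ with one-sided limits $f(s_\ell^\pm)$. Sequence: $x_0=1/2$; if $x_n\in[f(s_\ell^-),f(s_\ell^+)]$ for some $\ell$, $x_{n+1}=s_\ell$; otherwise $x_{n+1}\in(0,x_n)$ is the point with $f(x_{n+1})=x_n$. *)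

(* Defs.v *)
From Stdlib Require Import Reals Lra Lia ZArith.
Open Scope R_scope.

(* Fractional part with the paper's convention: {y} = y - floor y for y >= 0,
   and {y} = {-y} for y < 0. *)
Definition pfrac (y : R) : R :=
  if Rlt_dec y 0 then frac_part (- y) else frac_part y.

Definition M1 (C0 c1 x : R) : R := C0 * Rpower 2 (- pfrac (ln x / c1)).

Definition fM (alpha C0 c1 x : R) : R :=
  if Rle_dec x (1/2) then x * (1 + M1 C0 c1 x * Rpower x alpha)
  else 2 * x - 1.

Definition sdisc (c1 : R) (l : nat) : R := exp (- INR l * c1).

Definition left_lim (g : R -> R) (a L : R) : Prop :=
  limit1_in g (fun x => x < a) L a.
Definition right_lim (g : R -> R) (a L : R) : Prop :=
  limit1_in g (fun x => a < x) L a.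

Definition in_gap (alpha C0 c1 : R) (l : nat) (y : R) : Prop :=
  sdisc c1 l < 1/2 /\
  exists Lm Lp : R,
    left_lim (fM alpha C0 c1) (sdisc c1 l) Lm /\
    right_lim (fM alpha C0 c1) (sdisc c1 l) Lp /\
    Rmin Lm Lp <= y <= Rmax Lm Lp.

Definition is_orbit_seq (alpha C0 c1 : R) (x : nat -> R) : Prop :=
  x 0%nat = 1/2 /\
  forall n : nat,
    (exists l : nat, in_gap alpha C0 c1 l (x n) /\ x (S n) = sdisc c1 l)
    \/
    ((forall l : nat, ~ in_gap alpha C0 c1 l (x n)) /\
     0 < x (S n) < x n /\ fM alpha C0 c1 (x (S n)) = x n).

Definition M0 (C0 c1 : R) (x : nat -> R) (n : nat) : R :=
  / INR n * sum_f_R0 (fun j => M1 C0 c1 (x (S j))) (Nat.pred n).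

Definition wk (c : R) (k : nat) : nat := Z.to_nat (Int_part (c ^ k)).

(* Main.v *)
Require Import Defs.
From Stdlib Require Import Reals Lra Lia ZArith.
Open Scope R_scope.

Lemma exp_le_mono : forall u v, u <= v -> exp u <= exp v.
Proof. intros u v H. destruct (Rle_lt_or_eq_dec u v H) as [H1|H1].
 left; apply exp_increasing; auto. subst; lra. Qed.

Lemma ln_le_mono : forall u v, 0 < u -> u <= v -> ln u <= ln v.
Proof. intros u v Hu H. destruct (Rle_lt_or_eq_dec u v H) as [H1|H1].
 left; apply ln_increasing; auto. subst; lra. Qed.

Lemma ome_le : forall u, 1 - exp (- u) <= u.
Proof. intro u. pose proof (exp_ineq1_le (-u)). lra. Qed.

Lemma ome_ge : forall u, 0 <= u -> u / (1 + u) <= 1 - exp (- u).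
Proof. intros u Hu. pose proof (exp_ineq1_le u). rewrite exp_Ropp.
 assert (/ exp u <= / (1+u)) by (apply Rinv_le_contravar; lra).
 assert (u/(1+u) = 1 - /(1+u)) by (field; lra). lra. Qed.

Lemma ln1p_le : forall e, 0 <= e -> ln (1 + e) <= e.
Proof. intros e He. rewrite <- (ln_exp e) at 2. apply ln_le_mono. lra.
 pose proof (exp_ineq1_le e). lra. Qed.

Lemma ln1p_ge : forall e, 0 <= e -> e / (1 + e) <= ln (1 + e).
Proof. intros e He.
 pose proof (exp_ineq1_le (- ln (1+e))). rewrite exp_Ropp in H.
 rewrite exp_ln in H by lra.
 assert (e/(1+e) = 1 - /(1+e)) by (field; lra). lra. Qed.

Definition hfun (q e : R) := (1 - exp (- (q * ln (1 + e)))) / e.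

Lemma hfun_bounds : forall q e, 0 < q -> 0 < e ->
  q - (q * (1 + q) * e + q * q * (e * e)) <= hfun q e <= q.
Proof. intros q e Hq He. unfold hfun. set (u := q * ln (1+e)).
 pose proof (ln1p_le e (Rlt_le _ _ He)). pose proof (ln1p_ge e (Rlt_le _ _ He)).
 assert (Hu1 : u <= q * e) by (unfold u; apply Rmult_le_compat_l; lra).
 assert (Hu2 : q * (e/(1+e)) <= u) by (unfold u; apply Rmult_le_compat_l; lra).
 assert (Hu0 : 0 <= u). { assert (0 <= e/(1+e)) by (unfold Rdiv; apply Rmult_le_pos; [lra| left; apply Rinv_0_lt_compat; lra]). nra. }
 pose proof (ome_le u). pose proof (ome_ge u Hu0).
 split.
 - assert (Hd : u / (1+u) >= q * e / ((1+e)*(1+q*e))).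
   { apply Rle_ge. unfold Rdiv. apply Rle_trans with (u * / (1 + q*e)).
     + replace (q*e*/((1+e)*(1+q*e))) with ((q*(e/(1+e))) * /(1+q*e)) by (field; nra).
       apply Rmult_le_compat_r; [left; apply Rinv_0_lt_compat; nra| lra].
     + apply Rmult_le_compat_l; [lra|]. apply Rinv_le_contravar; nra. }
   apply Rle_trans with (q / ((1+e)*(1+q*e))).
   + set (D := (1+e)*(1+q*e)). assert (HD: 1 <= D) by (unfold D; nra).
     assert (q - q / D = q * (D - 1) / D) by (field; lra).
     assert (q * (D-1) / D <= q * (D - 1)).
     { unfold Rdiv. rewrite <- (Rmult_1_r (q*(D-1))) at 2. apply Rmult_le_compat_l. nra.
       rewrite <- Rinv_1. apply Rinv_le_contravar; lra. }
     assert (q*(D-1) = q * (1 + q) * e + q * q * (e * e)) by (unfold D; ring). lra.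
   + unfold Rdiv at 2. apply Rle_trans with ((u/(1+u)) * / e).
     * replace (q / ((1+e)*(1+q*e))) with ((q*e/((1+e)*(1+q*e))) * / e) by (field; nra).
       apply Rmult_le_compat_r; [left; apply Rinv_0_lt_compat; lra| lra].
     * apply Rmult_le_compat_r; [left; apply Rinv_0_lt_compat; lra| lra].
 - apply Rle_trans with (u / e). unfold Rdiv; apply Rmult_le_compat_r; [left; apply Rinv_0_lt_compat; lra| lra].
   apply (Rmult_le_reg_r e); auto. unfold Rdiv; rewrite Rmult_assoc, Rinv_l; lra.
Qed.

Lemma Int_part_mono : forall t1 t2, t1 <= t2 -> (Int_part t1 <= Int_part t2)%Z.
Proof. intros t1 t2 H. destruct (Z_le_gt_dec (Int_part t1) (Int_part t2)) as [h|h]; auto.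
 exfalso. pose proof (base_Int_part t1). pose proof (base_Int_part t2).
 assert (IZR (Int_part t2 + 1) <= IZR (Int_part t1)) by (apply IZR_le; lia).
 rewrite plus_IZR in H2. lra. Qed.

Lemma Int_part_IZR : forall z, Int_part (IZR z) = z.
Proof. intro z. symmetry. apply Int_part_spec. lra. Qed.

Lemma Int_part_shift : forall t z, Int_part (t + IZR z) = (Int_part t + z)%Z.
Proof. intros t z. symmetry. apply Int_part_spec. rewrite plus_IZR.
 pose proof (base_Int_part t). lra. Qed.

Lemma frac_shift : forall t z, frac_part (t + IZR z) = frac_part t.
Proof. intros. unfold frac_part. rewrite Int_part_shift, plus_IZR. ring. Qed.

Section PsiSec.
Variable a : R.
Hypothesis Ha : 0 < a.
Definition Kc := exp a / (exp a - 1).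
Definition bc := ln 2 + a.
Definition PsiB (l : Z) (p : R) := exp (a * IZR l) * (exp (bc * p) + Kc).
Definition Psi (t : R) := PsiB (Int_part t) (frac_part t).

Lemma ln2_pos : 0 < ln 2.
Proof. rewrite <- ln_1. apply ln_increasing; lra. Qed.

Lemma expa_gt1 : 1 < exp a.
Proof. pose proof (exp_ineq1_le a). lra. Qed.

Lemma PsiB_cont : forall l, PsiB l 1 = PsiB (l+1) 0.
Proof. intro l. unfold PsiB. rewrite plus_IZR. unfold bc.
 replace ((ln 2 + a) * 0) with 0 by ring. replace ((ln 2 + a) * 1) with (ln 2 + a) by ring.
 replace (a * (IZR l + 1)) with (a * IZR l + a) by ring.
 rewrite exp_0, !exp_plus, exp_ln by lra.
 unfold Kc. pose proof expa_gt1. field. lra. Qed.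

Lemma PsiB_block : forall l p1 p2, 0 <= p1 -> p1 <= p2 -> p2 <= 1 ->
  exp (a * (IZR l + p2)) - exp (a * (IZR l + p1)) <= PsiB l p2 - PsiB l p1 <=
  2 * bc * exp (a * (IZR l + p2)) * (p2 - p1).
Proof. intros l p1 p2 H1 H2 H3. unfold PsiB.
 pose proof ln2_pos as hl. assert (hb : a <= bc) by (unfold bc; lra).
 replace (exp (a * IZR l) * (exp (bc * p2) + Kc) - exp (a * IZR l) * (exp (bc * p1) + Kc))
   with (exp (a * IZR l) * (exp (bc * p2) - exp (bc * p1))) by ring.
 rewrite !Rmult_plus_distr_l, !exp_plus. pose proof (exp_pos (a * IZR l)) as hE.
 split.
 - rewrite <- Rmult_minus_distr_l. apply Rmult_le_compat_l; [lra|].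
   replace (bc*p2) with (bc*p1 + bc*(p2-p1)) by ring. replace (a*p2) with (a*p1 + a*(p2-p1)) by ring.
   rewrite !exp_plus.
   replace (exp (bc * p1) * exp (bc * (p2 - p1)) - exp (bc * p1)) with (exp (bc*p1) * (exp (bc*(p2-p1)) - 1)) by ring.
   replace (exp (a * p1) * exp (a * (p2 - p1)) - exp (a * p1)) with (exp (a*p1) * (exp (a*(p2-p1)) - 1)) by ring.
   apply Rmult_le_compat.
   + left; apply exp_pos.
   + assert (0 <= a*(p2-p1)) by nra. pose proof (exp_le_mono 0 (a*(p2-p1)) H). rewrite exp_0 in H0. lra.
   + apply exp_le_mono. nra.
   + apply Rplus_le_compat_r. apply exp_le_mono. nra.
 - assert (exp (bc*p2) - exp (bc*p1) = exp (bc*p2) * (1 - exp (- (bc*(p2-p1))))).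
   { replace (bc*p1) with (bc*p2 + - (bc*(p2-p1))) by ring. rewrite exp_plus. ring. }
   rewrite H. pose proof (ome_le (bc*(p2-p1))).
   assert (exp (bc*p2) <= 2 * exp (a*p2)).
   { unfold bc. rewrite Rmult_plus_distr_r, exp_plus.
     apply Rmult_le_compat_r. left; apply exp_pos. rewrite <- (exp_ln 2) at 2 by lra.
     apply exp_le_mono. nra. }
   assert (0 <= 1 - exp (- (bc * (p2 - p1)))).
   { pose proof (exp_le_mono (- (bc * (p2 - p1))) 0). rewrite exp_0 in H5. assert (- (bc * (p2 - p1)) <= 0) by nra. lra. }
   pose proof (exp_pos (bc*p2)). pose proof (exp_pos (a*p2)).
   apply Rle_trans with (exp (a * IZR l) * (2 * exp (a*p2) * (bc*(p2-p1)))).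
   + apply Rmult_le_compat_l; [lra|]. apply Rmult_le_compat; lra.
   + right. ring.
Qed.

Lemma Psi_eq : forall t, Psi t = PsiB (Int_part t) (t - IZR (Int_part t)).
Proof. reflexivity. Qed.

Lemma Psi_mono_n : forall n t1 t2, t1 <= t2 -> (Int_part t2 - Int_part t1)%Z = Z.of_nat n ->
  exp (a * t2) - exp (a * t1) <= Psi t2 - Psi t1 <= 2 * bc * exp (a * t2) * (t2 - t1).
Proof. induction n as [|n IH]; intros t1 t2 H Hn.
 - assert (E: Int_part t2 = Int_part t1) by lia. rewrite !Psi_eq. rewrite E.
   pose proof (base_Int_part t1). pose proof (base_Int_part t2). rewrite E in H1.
   pose proof (PsiB_block (Int_part t1) (t1 - IZR (Int_part t1)) (t2 - IZR (Int_part t1))) as HB.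
   replace (IZR (Int_part t1) + (t2 - IZR (Int_part t1))) with t2 in HB by ring.
   replace (IZR (Int_part t1) + (t1 - IZR (Int_part t1))) with t1 in HB by ring.
   replace (t2 - IZR (Int_part t1) - (t1 - IZR (Int_part t1))) with (t2 - t1) in HB by ring.
   apply HB; lra.
 - set (m := (Int_part t1 + 1)%Z). set (tm := IZR m).
   pose proof (base_Int_part t1). pose proof (base_Int_part t2).
   assert (Htm1 : t1 < tm) by (unfold tm, m; rewrite plus_IZR; lra).
   assert (Htm2 : tm <= t2). { apply Rle_trans with (IZR (Int_part t2)); [|lra]. apply IZR_le. unfold m. lia. }
   assert (Hi : Int_part tm = m) by (apply Int_part_IZR).
   assert (Hf : tm - IZR (Int_part tm) = 0) by (rewrite Hi; unfold tm; ring).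
   destruct (IH tm t2 Htm2) as [IH1 IH2]. { rewrite Hi. unfold m. lia. }
   assert (HP : Psi tm = PsiB (Int_part t1) 1).
   { rewrite Psi_eq, Hf, Hi. unfold m. rewrite PsiB_cont. reflexivity. }
   pose proof (PsiB_block (Int_part t1) (t1 - IZR (Int_part t1)) 1) as HB.
   replace (IZR (Int_part t1) + 1) with tm in HB by (unfold tm, m; rewrite plus_IZR; ring).
   replace (IZR (Int_part t1) + (t1 - IZR (Int_part t1))) with t1 in HB by ring.
   destruct HB as [HB1 HB2]; try lra. rewrite <- HP, <- Psi_eq in HB1, HB2.
   replace (1 - (t1 - IZR (Int_part t1))) with (tm - t1) in HB2 by (unfold tm, m; rewrite plus_IZR; ring).
   assert (exp (a*tm) <= exp (a*t2)) by (apply exp_le_mono; nra).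
   assert (0 < bc) by (pose proof ln2_pos; unfold bc; lra).
   split. lra.
   apply Rle_trans with (2*bc*exp (a*t2)*(t2-tm) + 2*bc*exp(a*t2)*(tm-t1)); [|right; ring].
   assert (2*bc*exp(a*tm)*(tm-t1) <= 2*bc*exp(a*t2)*(tm-t1)).
   { apply Rmult_le_compat_r; [lra|]. apply Rmult_le_compat_l; lra. }
   lra.
Qed.

Lemma Psi_mono : forall t1 t2, t1 <= t2 ->
  exp (a * t2) - exp (a * t1) <= Psi t2 - Psi t1 <= 2 * bc * exp (a * t2) * (t2 - t1).
Proof. intros t1 t2 H. apply (Psi_mono_n (Z.to_nat (Int_part t2 - Int_part t1))); auto.
 pose proof (Int_part_mono _ _ H). lia. Qed.

Lemma Psi_lip : forall t1 t2, Rabs (exp (a * t1) - exp (a * t2)) <= Rabs (Psi t1 - Psi t2).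
Proof. intros t1 t2. destruct (Rle_dec t1 t2) as [h|h].
 - destruct (Psi_mono t1 t2 h). assert (exp (a*t1) <= exp (a*t2)) by (apply exp_le_mono; nra).
   rewrite !Rabs_left1 by lra. lra.
 - destruct (Psi_mono t2 t1 ltac:(lra)). assert (exp (a*t2) <= exp (a*t1)) by (apply exp_le_mono; nra).
   rewrite !Rabs_right by lra. lra.
Qed.

Lemma Psi_shift : forall t z, Psi (t + IZR z) = exp (a * IZR z) * Psi t.
Proof. intros t z. unfold Psi, PsiB. rewrite Int_part_shift, frac_shift, plus_IZR.
 replace (a * (IZR (Int_part t) + IZR z)) with (a * IZR (Int_part t) + a * IZR z) by ring.
 rewrite exp_plus. ring. Qed.

End PsiSec.

Fixpoint ssum (f : nat -> R) (n : nat) : R :=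
  match n with O => 0 | S k => ssum f k + f k end.

Lemma ssum_tele : forall u n, ssum (fun j => u (S j) - u j) n = u n - u O.
Proof. intros u n. induction n; simpl. ring. rewrite IHn. ring. Qed.

Lemma ssum_sumf : forall f n, (1 <= n)%nat -> sum_f_R0 f (Nat.pred n) = ssum f n.
Proof. intros f n Hn. destruct n. lia. simpl Nat.pred. clear Hn. induction n.
 simpl. ring. simpl sum_f_R0. rewrite IHn. simpl. ring. Qed.

Lemma ssum_le : forall f g n, (forall j, f j <= g j) -> ssum f n <= ssum g n.
Proof. intros f g n H. induction n; simpl. lra. pose proof (H n). lra. Qed.

Lemma ssum_abs : forall f n, Rabs (ssum f n) <= ssum (fun j => Rabs (f j)) n.
Proof. intros f n. induction n; simpl. rewrite Rabs_R0; lra.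
 pose proof (Rabs_triang (ssum f n) (f n)). lra. Qed.

Lemma ssum_lin : forall f g a b n, ssum (fun j => a * f j + b * g j) n = a * ssum f n + b * ssum g n.
Proof. intros. induction n; simpl. ring. rewrite IHn. ring. Qed.

Lemma ssum_minus_const : forall f L n, ssum (fun j => f j - L) n = ssum f n - INR n * L.
Proof. intros. induction n; cbn [ssum]. simpl; ring. rewrite IHn. rewrite S_INR. ring. Qed.

Lemma ssum_nonneg : forall f n, (forall j, 0 <= f j) -> 0 <= ssum f n.
Proof. intros. induction n; simpl. lra. pose proof (H n). lra. Qed.

Lemma inv_INR_small : forall eps, 0 < eps -> exists N, forall n, (N <= n)%nat -> / INR n < eps.
Proof. intros eps He. destruct (archimed (/ eps)) as [h _].
 exists (Z.to_nat (up (/ eps))). intros n Hn.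
 assert (0 < / eps) by (apply Rinv_0_lt_compat; lra).
 assert (IZR (up (/eps)) <= INR n).
 { rewrite INR_IZR_INZ. apply IZR_le. assert (0 <= up (/eps))%Z. { apply le_IZR. lra. } lia. }
 assert (0 < INR n) by lra.
 rewrite <- (Rinv_inv eps). apply Rinv_lt_contravar. nra. lra. Qed.

Lemma cesaro_E : forall E, Un_cv E 0 -> Un_cv (fun n => ssum E n / INR n) 0.
Proof. intros E H. pose proof (Cesaro_1 E 0 H) as HC. intros eps He.
 destruct (HC eps He) as [N HN]. exists (S N). intros n Hn. rewrite <- ssum_sumf by lia. apply HN. lia. Qed.

Lemma cesaro_gen : forall (u E ind : nat -> R) L A B A',
  0 <= A -> 0 <= B -> 0 <= A' ->
  (forall j, 0 <= E j) -> Un_cv E 0 ->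
  (forall j, Rabs (u j - L) <= A * E j + B * ind j) ->
  (forall n, ssum ind n <= A' * ssum E n + 1) ->
  Un_cv (fun n => ssum u n / INR n) L.
Proof. intros u E ind L A B A' HA HB HA' HE0 HE Hu Hi eps He.
 pose proof (cesaro_E E HE) as HC.
 set (C := A + B * A' + 1).
 destruct (HC (eps / (2 * C))) as [N1 HN1]. { unfold C. apply Rdiv_lt_0_compat; nra. }
 destruct (inv_INR_small (eps / (2 * (B + 1)))) as [N2 HN2]. { apply Rdiv_lt_0_compat; lra. }
 exists (S (N1 + N2)). intros n Hn. unfold R_dist.
 assert (Hn0 : 0 < INR n) by (apply lt_0_INR; lia).
 specialize (HN1 n ltac:(lia)). specialize (HN2 n ltac:(lia)). unfold R_dist in HN1.
 rewrite Rminus_0_r in HN1. pose proof (ssum_nonneg E n HE0) as hs.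
 rewrite Rabs_right in HN1 by (apply Rle_ge; unfold Rdiv; apply Rmult_le_pos; [lra| left; apply Rinv_0_lt_compat; lra]).
 replace (ssum u n / INR n - L) with (ssum (fun j => u j - L) n / INR n) by (rewrite ssum_minus_const; field; lra).
 unfold Rdiv. rewrite Rabs_mult, (Rabs_right (/ INR n)) by (apply Rle_ge; left; apply Rinv_0_lt_compat; lra).
 assert (Hs : Rabs (ssum (fun j => u j - L) n) <= A * ssum E n + B * (A' * ssum E n + 1)).
 { eapply Rle_trans. apply ssum_abs. eapply Rle_trans. apply (ssum_le _ (fun j => A * E j + B * ind j)). auto.
   rewrite ssum_lin. specialize (Hi n). apply Rplus_le_compat_l. apply Rmult_le_compat_l; auto. }
 assert (Hi0 : 0 < / INR n) by (apply Rinv_0_lt_compat; lra).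
 apply Rle_lt_trans with ((A * ssum E n + B * (A' * ssum E n + 1)) * / INR n).
 apply Rmult_le_compat_r; lra.
 replace ((A * ssum E n + B * (A' * ssum E n + 1)) * / INR n) with
   ((A + B * A') * (ssum E n / INR n) + B * / INR n) by (field; lra).
 assert (C > 0) by (unfold C; nra).
 assert ((A + B * A') * (ssum E n / INR n) <= C * (eps / (2 * C))).
 { apply Rmult_le_compat. nra. unfold Rdiv; apply Rmult_le_pos; lra. unfold C; lra. lra. }
 assert (B * / INR n < (B + 1) * (eps / (2 * (B + 1)))).
 { apply Rle_lt_trans with ((B+1) * / INR n). nra. apply Rmult_lt_compat_l; lra. }
 replace (C * (eps / (2 * C))) with (eps / 2) in H0 by (field; lra).
 replace ((B + 1) * (eps / (2 * (B + 1)))) with (eps / 2) in H1 by (field; lra).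
 lra.
Qed.

Section Orbit.
Variables alpha c1 C0 : R.
Variable x : nat -> R.
Hypothesis Halpha : 0 < alpha < 1.
Hypothesis Hc1 : 0 < c1.
Hypothesis HC0 : left_lim (fM alpha C0 c1) (1/2) 1.
Hypothesis Hx : is_orbit_seq alpha C0 c1 x.

Lemma pfrac_range : forall y, 0 <= pfrac y < 1.
Proof. intro y. unfold pfrac. destruct (Rlt_dec y 0); destruct (base_fp (-y)); destruct (base_fp y); lra. Qed.

Lemma Rpower2_range : forall p, 0 <= p < 1 -> / 2 <= Rpower 2 (- p) <= 1.
Proof. intros p Hp. unfold Rpower. pose proof ln2_pos. split.
 - replace (/2) with (exp (- ln 2)) by (rewrite exp_Ropp, exp_ln; lra). apply exp_le_mono. nra.
 - rewrite <- exp_0. apply exp_le_mono. nra. Qed.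

Lemma fM_small : forall z, z <= 1/2 -> fM alpha C0 c1 z = z * (1 + M1 C0 c1 z * Rpower z alpha).
Proof. intros z Hz. unfold fM. destruct (Rle_dec z (1/2)); [reflexivity| lra]. Qed.

Lemma Rpower_pos : forall z p, 0 < Rpower z p.
Proof. intros. unfold Rpower. apply exp_pos. Qed.

Lemma C0_pos : 0 < C0.
Proof. unfold left_lim, limit1_in, limit_in in HC0. simpl in HC0. unfold R_dist in HC0.
 destruct (HC0 (1/4)) as [alp [Halp H]]; [lra|].
 set (z := 1/2 - Rmin alp (1/2) / 2).
 assert (Hm1 : 0 < Rmin alp (1/2)) by (apply Rmin_pos; lra).
 assert (Hm2 : Rmin alp (1/2) <= 1/2) by apply Rmin_r.
 assert (Hm3 : Rmin alp (1/2) <= alp) by apply Rmin_l.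
 assert (Hz : z < 1/2 /\ Rabs (z - 1/2) < alp).
 { unfold z. split. lra. rewrite Rabs_left by lra. lra. }
 specialize (H z Hz). rewrite fM_small in H by (unfold z; lra).
 apply Rabs_def2 in H. destruct H as [_ H].
 assert (0 < M1 C0 c1 z * Rpower z alpha).
 { assert (0 < z) by (unfold z; lra).
   destruct (Rle_dec (M1 C0 c1 z * Rpower z alpha) 0); [|lra].
   assert (z * (1 + M1 C0 c1 z * Rpower z alpha) <= z * 1) by (apply Rmult_le_compat_l; lra). lra. }
 pose proof (Rpower_pos z alpha). pose proof (Rpower_pos 2 (- pfrac (ln z / c1))).
 unfold M1 in H0. 
 destruct (Rle_dec C0 0); [|lra]. exfalso.
 assert (C0 * Rpower 2 (- pfrac (ln z / c1)) <= 0) by nra. nra.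
Qed.

Lemma M1_bounds : forall z, C0 / 2 <= M1 C0 c1 z <= C0.
Proof. intro z. unfold M1. pose proof C0_pos. pose proof (Rpower2_range _ (pfrac_range (ln z / c1))).
 split; nra. Qed.

Definition gK (K z : R) := z * (1 + K * Rpower z alpha).

Lemma f_bounds : forall z, 0 < z <= 1/2 -> gK (C0/2) z <= fM alpha C0 c1 z <= gK C0 z.
Proof. intros z Hz. rewrite fM_small by lra. unfold gK. pose proof (M1_bounds z).
 pose proof (Rpower_pos z alpha). split; apply Rmult_le_compat_l; nra. Qed.

Lemma gK_mono : forall K z1 z2, 0 <= K -> 0 < z1 -> z1 <= z2 -> gK K z1 <= gK K z2.
Proof. intros K z1 z2 HK H1 H2. unfold gK. pose proof (Rpower_pos z1 alpha).
 assert (Rpower z1 alpha <= Rpower z2 alpha).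
 { unfold Rpower. apply exp_le_mono. apply Rmult_le_compat_l. lra. apply ln_le_mono; lra. }
 apply Rmult_le_compat; nra. Qed.

Lemma gK_cont : forall K s, 0 < s -> forall eps, 0 < eps -> exists eta, 0 < eta /\
  forall z, Rabs (z - s) < eta -> Rabs (gK K z - gK K s) < eps.
Proof. intros K s Hs eps He.
 assert (Hc : continuity_pt (gK K) s).
 { unfold gK. apply continuity_pt_mult. apply derivable_continuous_pt, derivable_pt_id.
   apply continuity_pt_plus. apply continuity_pt_const. intros u v; reflexivity.
   apply continuity_pt_mult. apply continuity_pt_const. intros u v; reflexivity.
   apply derivable_continuous_pt. exists (alpha * Rpower s (alpha - 1)).
   apply derivable_pt_lim_power; auto. }
 unfold continuity_pt, continue_in, limit1_in, limit_in in Hc. simpl in Hc. unfold R_dist in Hc.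
 destruct (Hc eps He) as [alp [Halp H]]. exists alp. split; auto.
 intros z Hz. destruct (Req_dec z s) as [->|hne].
 - rewrite Rminus_diag, Rabs_R0. auto.
 - apply H. split; auto. unfold D_x, no_cond. auto.
Qed.

Lemma lim_bounds : forall s L, 0 < s < 1/2 ->
  (left_lim (fM alpha C0 c1) s L \/ right_lim (fM alpha C0 c1) s L) ->
  gK (C0/2) s <= L <= gK C0 s.
Proof. intros s L Hs HL. pose proof C0_pos.
 assert (Hpt : forall eps eta, 0 < eps -> 0 < eta -> exists z, Rabs (z - s) < eta /\ 0 < z <= 1/2 /\
            Rabs (fM alpha C0 c1 z - L) < eps).
 { intros eps eta He Hn.
   destruct HL as [HL|HL]; unfold left_lim, right_lim, limit1_in, limit_in in HL; simpl in HL;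
     unfold R_dist in HL; destruct (HL eps He) as [alp [Halp H0]];
     set (h := Rmin (Rmin alp eta) (Rmin s (1/2 - s)) / 2);
     assert (Hh1 : 0 < h) by (unfold h; assert (0 < Rmin (Rmin alp eta) (Rmin s (1/2 - s))) by (apply Rmin_pos; apply Rmin_pos; lra); lra);
     assert (Hh2 : h < alp /\ h < eta /\ h < s /\ h < 1/2 - s).
   all: try (unfold h; pose proof (Rmin_l (Rmin alp eta) (Rmin s (1/2 - s)));
     pose proof (Rmin_r (Rmin alp eta) (Rmin s (1/2 - s)));
     pose proof (Rmin_l alp eta); pose proof (Rmin_r alp eta);
     pose proof (Rmin_l s (1/2-s)); pose proof (Rmin_r s (1/2-s)); lra).
   - exists (s - h). assert (Rabs (s - h - s) = h) by (rewrite Rabs_left by lra; lra).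
     split. lra. split. lra. apply H0. split; lra.
   - exists (s + h). assert (Rabs (s + h - s) = h) by (rewrite Rabs_right by lra; lra).
     split. lra. split. lra. apply H0. split; lra. }
 split.
 - destruct (Rle_dec (gK (C0/2) s) L) as [h|h]; auto. exfalso.
   set (d := (gK (C0/2) s - L) / 2).
   destruct (gK_cont (C0/2) s ltac:(lra) d ltac:(unfold d; lra)) as [eta [He Hg]].
   destruct (Hpt d eta ltac:(unfold d; lra) He) as [z [Hz1 [Hz2 Hz3]]].
   specialize (Hg z Hz1). pose proof (f_bounds z Hz2).
   apply Rabs_def2 in Hg. apply Rabs_def2 in Hz3. unfold d in *. lra.
 - destruct (Rle_dec L (gK C0 s)) as [h|h]; auto. exfalso.
   set (d := (L - gK C0 s) / 2).
   destruct (gK_cont C0 s ltac:(lra) d ltac:(unfold d; lra)) as [eta [He Hg]].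
   destruct (Hpt d eta ltac:(unfold d; lra) He) as [z [Hz1 [Hz2 Hz3]]].
   specialize (Hg z Hz1). pose proof (f_bounds z Hz2).
   apply Rabs_def2 in Hg. apply Rabs_def2 in Hz3. unfold d in *. lra.
Qed.


Lemma step : forall n, 0 < x n <= 1/2 ->
  0 < x (S n) < x n /\ gK (C0/2) (x (S n)) <= x n <= gK C0 (x (S n)) /\
  (x n = x (S n) * (1 + M1 C0 c1 (x (S n)) * Rpower (x (S n)) alpha) \/ exists l, x (S n) = sdisc c1 l).
Proof. intros n Hn. pose proof C0_pos. destruct Hx as [H0 Hs].
 destruct (Hs n) as [[l [Hg Heq]] | [Hng [Hlt Hf]]].
 - destruct Hg as [Hsl [Lm [Lp [HLm [HLp HLx]]]]].
   assert (Hs0 : 0 < sdisc c1 l) by (unfold sdisc; apply exp_pos).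
   pose proof (lim_bounds (sdisc c1 l) Lm (conj Hs0 Hsl) (or_introl HLm)).
   pose proof (lim_bounds (sdisc c1 l) Lp (conj Hs0 Hsl) (or_intror HLp)).
   assert (gK (C0/2) (sdisc c1 l) <= Rmin Lm Lp) by (apply Rmin_glb; lra).
   assert (Rmax Lm Lp <= gK C0 (sdisc c1 l)) by (apply Rmax_lub; lra).
   assert (sdisc c1 l < gK (C0/2) (sdisc c1 l)).
   { unfold gK. pose proof (Rpower_pos (sdisc c1 l) alpha).
     assert (0 < C0 / 2 * Rpower (sdisc c1 l) alpha) by (apply Rmult_lt_0_compat; lra). nra. }
   rewrite Heq. split; [lra|]. split; [lra|]. right; exists l; auto.
 - assert (Hx1 : 0 < x (S n) <= 1/2) by lra.
   pose proof (f_bounds _ Hx1). rewrite Hf in H1. split; [lra|]. split; [lra|].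
   left. rewrite <- Hf. apply fM_small. lra.
Qed.

Lemma xbound : forall n, 0 < x n <= 1/2.
Proof. induction n. destruct Hx as [H0 _]. rewrite H0; lra.
 destruct (step n IHn) as [[h1 h2] _]. lra. Qed.

Definition tt (n : nat) := - (ln (x n) / c1).
Definition aa := alpha * c1.

Lemma aa_pos : 0 < aa.
Proof. unfold aa; nra. Qed.

Lemma lnx_neg : forall n, ln (x n) < 0.
Proof. intro n. rewrite <- ln_1. apply ln_increasing; destruct (xbound n); lra. Qed.

Lemma x_exp : forall n, x n = exp (- (c1 * tt n)).
Proof. intro n. unfold tt. replace (- (c1 * - (ln (x n) / c1))) with (ln (x n)) by (field; lra).
 rewrite exp_ln; auto. apply xbound. Qed.

Lemma tt_pos : forall n, 0 < tt n.
Proof. intro n. unfold tt. pose proof (lnx_neg n). unfold Rdiv.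
 assert (0 < / c1) by (apply Rinv_0_lt_compat; lra). nra. Qed.

Lemma Rpow_x : forall n, Rpower (x n) alpha = exp (- (aa * tt n)).
Proof. intro n. unfold Rpower, aa, tt. f_equal. field. lra. Qed.

Lemma M1_x : forall n, M1 C0 c1 (x n) = C0 * exp (- (frac_part (tt n) * ln 2)).
Proof. intro n. unfold M1, pfrac, Rpower. destruct (Rlt_dec (ln (x n) / c1) 0) as [h|h].
 - unfold tt. f_equal. f_equal. ring.
 - exfalso. apply h. pose proof (lnx_neg n). unfold Rdiv.
   assert (0 < / c1) by (apply Rinv_0_lt_compat; lra). nra. Qed.

Definition EE (n : nat) := exp (- (aa * tt (S n))).

Lemma EE_pos : forall n, 0 < EE n <= 1.
Proof. intro n. unfold EE. split. apply exp_pos. rewrite <- exp_0. apply exp_le_mono.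
 pose proof (tt_pos (S n)). pose proof aa_pos. nra. Qed.

Lemma tstep1 : forall n, ln (1 + C0/2 * EE n) <= c1 * (tt (S n) - tt n) <= ln (1 + C0 * EE n).
Proof. intro n. destruct (step n (xbound n)) as [[h1 h2] [[h3 h4] _]].
 assert (Hc : c1 * (tt (S n) - tt n) = ln (x n) - ln (x (S n))) by (unfold tt; field; lra).
 rewrite Hc. unfold gK in h3, h4. rewrite Rpow_x in h3, h4. fold (EE n) in h3, h4.
 pose proof C0_pos. pose proof (EE_pos n).
 assert (0 < 1 + C0/2 * EE n) by nra. assert (0 < 1 + C0 * EE n) by nra.
 split.
 - apply (Rplus_le_reg_r (ln (x (S n)))). replace (ln (x n) - ln (x (S n)) + ln (x (S n))) with (ln (x n)) by ring.
   rewrite Rplus_comm, <- ln_mult by lra. apply ln_le_mono; nra.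
 - apply (Rplus_le_reg_r (ln (x (S n)))). replace (ln (x n) - ln (x (S n)) + ln (x (S n))) with (ln (x n)) by ring.
   rewrite Rplus_comm, <- ln_mult by lra. apply ln_le_mono; nra.
Qed.

Lemma tt_incr : forall n, tt n < tt (S n).
Proof. intro n. pose proof (tstep1 n) as [h _]. pose proof C0_pos. pose proof (EE_pos n).
 assert (0 < ln (1 + C0/2 * EE n)). { rewrite <- ln_1. apply ln_increasing. lra. nra. }
 assert (0 < c1 * (tt (S n) - tt n)) by lra. nra. Qed.

Lemma tstep2 : forall n, Int_part (tt (S n)) = Int_part (tt n) ->
  c1 * (tt (S n) - tt n) = ln (1 + M1 C0 c1 (x (S n)) * EE n).
Proof. intros n Hi. destruct (step n (xbound n)) as [[h1 h2] [_ [Hf | [l Hl]]]].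
 - assert (Hc : c1 * (tt (S n) - tt n) = ln (x n) - ln (x (S n))) by (unfold tt; field; lra).
   rewrite Hc. rewrite Hf at 1. rewrite Rpow_x. fold (EE n). rewrite ln_mult. ring. lra.
   pose proof (M1_bounds (x (S n))). pose proof C0_pos. pose proof (EE_pos n). nra.
 - exfalso. assert (Ht : tt (S n) = INR l).
   { unfold tt. rewrite Hl. unfold sdisc. rewrite ln_exp. field. lra. }
   pose proof (tt_incr n). rewrite Ht in Hi, H. rewrite INR_IZR_INZ, Int_part_IZR in Hi.
   pose proof (base_Int_part (tt n)) as [hb _]. rewrite INR_IZR_INZ in H. rewrite Hi in H. lra.
Qed.

Definition ind (j : nat) := IZR (Int_part (tt (S j))) - IZR (Int_part (tt j)).
Definition pp := bc aa / c1.
Definition dd (j : nat) := Psi aa (tt (S j)) - Psi aa (tt j).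
Definition DD (j : nat) := (exp (aa * tt (S j)) - exp (aa * tt j)) / alpha - M1 C0 c1 (x (S j)).
Definition eps_ (j : nat) := M1 C0 c1 (x (S j)) * EE j.

Lemma ind_cases : forall j, (Int_part (tt (S j)) = Int_part (tt j) /\ ind j = 0) \/ 1 <= ind j.
Proof. intro j. unfold ind. pose proof (Int_part_mono _ _ (Rlt_le _ _ (tt_incr j))).
 destruct (Z.eq_dec (Int_part (tt (S j))) (Int_part (tt j))) as [e|e].
 - left. rewrite e. split; auto; ring.
 - right. assert (IZR (Int_part (tt j) + 1) <= IZR (Int_part (tt (S j)))) by (apply IZR_le; lia).
   rewrite plus_IZR in H0. lra. Qed.

Lemma ind_nonneg : forall j, 0 <= ind j.
Proof. intro j. destruct (ind_cases j) as [[_ h]|h]; lra. Qed.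

Lemma eps_bounds : forall j, 0 < eps_ j <= C0 * EE j /\ eps_ j * eps_ j <= C0 * C0 * EE j.
Proof. intro j. unfold eps_. pose proof (M1_bounds (x (S j))). pose proof C0_pos. pose proof (EE_pos j).
 split. split. nra. nra.
 assert (M1 C0 c1 (x (S j)) * EE j <= C0 * EE j) by nra.
 assert (0 < M1 C0 c1 (x (S j)) * EE j) by nra.
 assert (C0 * EE j * (C0 * EE j) <= C0 * C0 * EE j) by nra. nra. Qed.

Lemma expEE : forall j, exp (aa * tt (S j)) * EE j = 1.
Proof. intro j. unfold EE. rewrite <- exp_plus. replace (aa * tt (S j) + - (aa * tt (S j))) with 0 by ring.
 apply exp_0. Qed.

Lemma dd_good : forall j, Int_part (tt (S j)) = Int_part (tt j) -> dd j = C0 * hfun pp (eps_ j).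
Proof. intros j Hi. pose proof (tstep2 j Hi) as Hs. fold (eps_ j) in Hs.
 pose proof (eps_bounds j) as [[he _] _].
 unfold dd. rewrite !Psi_eq. rewrite Hi. set (l := Int_part (tt j)).
 unfold PsiB. set (t' := tt (S j)). set (t := tt j).
 set (X := exp (aa * IZR l)). set (Y := exp (bc aa * (t' - IZR l))).
 set (Z := exp (- (pp * ln (1 + eps_ j)))).
 assert (H1 : exp (bc aa * (t - IZR l)) = Y * Z).
 { unfold Y, Z. rewrite <- exp_plus. f_equal. rewrite <- Hs. unfold pp, t, t'. field. lra. }
 assert (H2 : X * Y * eps_ j = C0).
 { unfold X, Y, eps_, EE. rewrite M1_x. fold t'. unfold frac_part. fold t'.
   replace (Int_part t') with l by (unfold t', l; rewrite Hi; reflexivity).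
   replace (exp (aa * IZR l) * exp (bc aa * (t' - IZR l)) *
     (C0 * exp (- ((t' - IZR l) * ln 2)) * exp (- (aa * t'))))
   with (C0 * (exp (aa * IZR l) * exp (bc aa * (t' - IZR l)) * exp (- ((t' - IZR l) * ln 2)) * exp (- (aa * t')))) by ring.
   rewrite <- !exp_plus. unfold bc. 
   replace (aa * IZR l + (ln 2 + aa) * (t' - IZR l) + - ((t' - IZR l) * ln 2) + - (aa * t')) with 0 by ring.
   rewrite exp_0. ring. }
 rewrite H1. unfold hfun. fold Z.
 replace (X * (Y + Kc aa) - X * (Y * Z + Kc aa)) with (X * Y * eps_ j * ((1 - Z) / eps_ j)) by (field; lra).
 rewrite H2. reflexivity.
Qed.

Lemma DD_good : forall j, Int_part (tt (S j)) = Int_part (tt j) ->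
  DD j = M1 C0 c1 (x (S j)) / alpha * (hfun alpha (eps_ j) - alpha).
Proof. intros j Hi. pose proof (tstep2 j Hi) as Hs. fold (eps_ j) in Hs.
 pose proof (eps_bounds j) as [[he _] _].
 unfold DD. set (t' := tt (S j)). set (t := tt j).
 assert (H1 : exp (aa * t) = exp (aa * t') * exp (- (alpha * ln (1 + eps_ j)))).
 { rewrite <- exp_plus. f_equal. rewrite <- Hs. unfold aa, t, t'. ring. }
 assert (H2 : exp (aa * t') * eps_ j = M1 C0 c1 (x (S j))).
 { unfold eps_. pose proof (expEE j). fold t' in H. transitivity (M1 C0 c1 (x (S j)) * (exp (aa * t') * EE j)). ring. rewrite H; ring. }
 rewrite H1. unfold hfun. rewrite <- H2. field. split; lra.
Qed.

Definition A1 := C0 * (pp * (1 + pp) * C0 + pp * pp * (C0 * C0)).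
Definition B1 := 2 * bc aa * C0 / c1 + C0 * pp.
Definition A2 := C0 / alpha * (alpha * (1 + alpha) * C0 + alpha * alpha * (C0 * C0)).
Definition B2 := 2 * C0.

Lemma pp_pos : 0 < pp.
Proof. unfold pp, bc. pose proof (ln2_pos). pose proof aa_pos. unfold Rdiv.
 apply Rmult_lt_0_compat. lra. apply Rinv_0_lt_compat; lra. Qed.

Lemma bad_common : forall j, 0 <= exp (aa * tt (S j)) * (tt (S j) - tt j) <= C0 / c1.
Proof. intro j. pose proof (tstep1 j) as [_ h]. pose proof (tt_incr j). pose proof C0_pos.
 pose proof (EE_pos j). pose proof (ln1p_le (C0 * EE j) ltac:(nra)). pose proof (expEE j).
 pose proof (exp_pos (aa * tt (S j))). split. nra.
 apply (Rmult_le_reg_l c1); auto.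
 replace (c1 * (exp (aa * tt (S j)) * (tt (S j) - tt j))) with (exp (aa * tt (S j)) * (c1 * (tt (S j) - tt j))) by ring.
 replace (c1 * (C0 / c1)) with (C0 * (exp (aa * tt (S j)) * EE j)) by (rewrite H3; field; lra).
 replace (C0 * (exp (aa * tt (S j)) * EE j)) with (exp (aa * tt (S j)) * (C0 * EE j)) by ring.
 apply Rmult_le_compat_l; lra. Qed.

Lemma dd_bound : forall j, Rabs (dd j - C0 * pp) <= A1 * EE j + B1 * ind j.
Proof. intro j. pose proof C0_pos. pose proof pp_pos. pose proof (EE_pos j). pose proof (ind_nonneg j).
 pose proof (eps_bounds j) as [[he1 he2] he3].
 destruct (ind_cases j) as [[Hi Hz]|Hb].
 - rewrite dd_good by auto. rewrite Hz.
   pose proof (hfun_bounds pp (eps_ j) pp_pos he1) as [h1 h2].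
   assert (Rabs (C0 * hfun pp (eps_ j) - C0 * pp) <= C0 * (pp * (1 + pp) * eps_ j + pp * pp * (eps_ j * eps_ j))).
   { rewrite Rabs_left1 by nra. nra. }
   unfold A1. assert (pp * (1 + pp) * eps_ j <= pp * (1 + pp) * (C0 * EE j)) by (apply Rmult_le_compat_l; nra).
   assert (pp * pp * (eps_ j * eps_ j) <= pp * pp * (C0 * C0 * EE j)) by (apply Rmult_le_compat_l; nra).
   nra.
 - pose proof (Psi_mono aa aa_pos (tt j) (tt (S j)) (Rlt_le _ _ (tt_incr j))) as [h1 h2].
   fold (dd j) in h1, h2. pose proof (exp_le_mono (aa * tt j) (aa * tt (S j))).
   assert (exp (aa * tt j) <= exp (aa * tt (S j))). { apply H3. pose proof (tt_incr j). pose proof aa_pos. nra. }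
   pose proof (bad_common j). assert (0 < bc aa) by (unfold bc; pose proof ln2_pos; pose proof aa_pos; lra).
   assert (dd j <= 2 * bc aa * C0 / c1).
   { replace (2 * bc aa * C0 / c1) with (2 * bc aa * (C0 / c1)) by (field; lra).
     apply Rle_trans with (2 * bc aa * (exp (aa * tt (S j)) * (tt (S j) - tt j))). lra.
     apply Rmult_le_compat_l. lra. lra. }
   assert (0 <= 2 * bc aa * C0 / c1).
   { unfold Rdiv. apply Rmult_le_pos. nra. left; apply Rinv_0_lt_compat; lra. }
   assert (Rabs (dd j - C0 * pp) <= B1). { unfold B1. apply Rabs_le. split; nra. }
   assert (0 <= B1) by (pose proof (Rabs_pos (dd j - C0*pp)); lra).
   assert (B1 <= B1 * ind j) by nra. assert (0 <= A1 * EE j) by (unfold A1; apply Rmult_le_pos; [|lra]; apply Rmult_le_pos; [lra|]; nra). lra.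
Qed.

Lemma DD_bound : forall j, Rabs (DD j) <= A2 * EE j + B2 * ind j.
Proof. intro j. pose proof C0_pos. pose proof (EE_pos j). pose proof (ind_nonneg j).
 pose proof (eps_bounds j) as [[he1 he2] he3]. pose proof (M1_bounds (x (S j))).
 destruct (ind_cases j) as [[Hi Hz]|Hb].
 - rewrite DD_good by auto. rewrite Hz.
   pose proof (hfun_bounds alpha (eps_ j) ltac:(lra) he1) as [h1 h2].
   assert (0 <= M1 C0 c1 (x (S j)) / alpha) by (unfold Rdiv; apply Rmult_le_pos; [lra| left; apply Rinv_0_lt_compat; lra]).
   assert (M1 C0 c1 (x (S j)) / alpha <= C0 / alpha) by (unfold Rdiv; apply Rmult_le_compat_r; [left; apply Rinv_0_lt_compat; lra| lra]).
   assert (Hq : Rabs (hfun alpha (eps_ j) - alpha) <= alpha * (1 + alpha) * (C0 * EE j) + alpha * alpha * (C0 * C0 * EE j)).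
   { assert (alpha * (1 + alpha) * eps_ j <= alpha * (1 + alpha) * (C0 * EE j)) by (apply Rmult_le_compat_l; nra).
     assert (alpha * alpha * (eps_ j * eps_ j) <= alpha * alpha * (C0 * C0 * EE j)) by (apply Rmult_le_compat_l; nra).
     rewrite Rabs_left1 by lra. lra. }
   rewrite Rabs_mult, (Rabs_right (M1 C0 c1 (x (S j)) / alpha)) by lra.
   unfold A2. rewrite Rmult_0_r, Rplus_0_r. rewrite Rmult_assoc.
   apply Rmult_le_compat; [lra | apply Rabs_pos | lra | ].
   replace ((alpha * (1 + alpha) * C0 + alpha * alpha * (C0 * C0)) * EE j) with
     (alpha * (1 + alpha) * (C0 * EE j) + alpha * alpha * (C0 * C0 * EE j)) by ring. lra.
 - pose proof (bad_common j). pose proof (tt_incr j). pose proof aa_pos.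
   set (u := aa * (tt (S j) - tt j)).
   assert (Hd : exp (aa * tt (S j)) - exp (aa * tt j) = exp (aa * tt (S j)) * (1 - exp (- u))).
   { unfold u. replace (aa * tt j) with (aa * tt (S j) + - (aa * (tt (S j) - tt j))) by ring.
     rewrite exp_plus. ring. }
   pose proof (ome_le u). assert (0 <= 1 - exp (- u)).
   { pose proof (exp_le_mono (-u) 0). rewrite exp_0 in H7. assert (-u <= 0) by (unfold u; nra). lra. }
   pose proof (exp_pos (aa * tt (S j))).
   assert (exp (aa * tt (S j)) - exp (aa * tt j) <= alpha * C0).
   { rewrite Hd. apply Rle_trans with (exp (aa * tt (S j)) * u). apply Rmult_le_compat_l; lra.
     unfold u, aa. replace (exp (alpha * c1 * tt (S j)) * (alpha * c1 * (tt (S j) - tt j))) with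
       (alpha * c1 * (exp (aa * tt (S j)) * (tt (S j) - tt j))) by (unfold aa; ring).
     replace (alpha * C0) with (alpha * c1 * (C0 / c1)) by (field; lra).
     apply Rmult_le_compat_l. nra. lra. }
   assert (0 <= (exp (aa * tt (S j)) - exp (aa * tt j)) / alpha <= C0).
   { split. unfold Rdiv; apply Rmult_le_pos; [nra| left; apply Rinv_0_lt_compat; lra].
     apply (Rmult_le_reg_l alpha); [lra|]. replace (alpha * ((exp (aa * tt (S j)) - exp (aa * tt j)) / alpha)) with
       (exp (aa * tt (S j)) - exp (aa * tt j)) by (field; lra). lra. }
   unfold DD. assert (Rabs ((exp (aa * tt (S j)) - exp (aa * tt j)) / alpha - M1 C0 c1 (x (S j))) <= B2).
   { unfold B2. apply Rabs_le. lra. }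
   assert (0 <= A2 * EE j).
   { unfold A2. apply Rmult_le_pos; [|lra]. apply Rmult_le_pos.
     unfold Rdiv; apply Rmult_le_pos; [lra| left; apply Rinv_0_lt_compat; lra]. nra. }
   unfold B2 in *. nra.
Qed.

Lemma tt_mono : forall m n, (m <= n)%nat -> tt m <= tt n.
Proof. intros m n H. induction H. lra. pose proof (tt_incr m0). lra. Qed.

Lemma EE_cv : Un_cv EE 0.
Proof. intros eps He. pose proof C0_pos. pose proof aa_pos.
 set (T := - ln eps / aa). set (dl := ln (1 + C0 / 2 * eps) / c1).
 assert (Hdl : 0 < dl).
 { unfold dl. unfold Rdiv at 1. apply Rmult_lt_0_compat; [|apply Rinv_0_lt_compat; lra].
   rewrite <- ln_1. apply ln_increasing. lra. nra. }
 assert (Hind : forall n, (exists m, T < tt m) \/ tt O + INR n * dl <= tt n).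
 { induction n. right. simpl. lra.
   destruct IHn as [h|h]. left; auto.
   destruct (Rlt_dec T (tt (S n))) as [h2|h2]. left; exists (S n); auto.
   right. assert (EE n >= eps).
   { unfold EE. apply Rle_ge. replace eps with (exp (- (aa * T))) at 1.
     apply exp_le_mono. nra. unfold T. replace (- (aa * (- ln eps / aa))) with (ln eps) by (field; lra).
     apply exp_ln; lra. }
   pose proof (tstep1 n) as [h3 _].
   assert (ln (1 + C0/2 * eps) <= ln (1 + C0/2 * EE n)) by (apply ln_le_mono; nra).
   assert (dl <= tt (S n) - tt n).
   { unfold dl. apply (Rmult_le_reg_l c1); auto. replace (c1 * (ln (1 + C0 / 2 * eps) / c1)) with (ln (1 + C0 / 2 * eps)) by (field; lra). lra. }
   rewrite S_INR. lra. }
 destruct (archimed ((T - tt O) / dl)) as [ha _].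
 set (n0 := Z.to_nat (up ((T - tt O) / dl))).
 assert (Hn0 : (T - tt O) / dl < INR n0).
 { unfold n0. rewrite INR_IZR_INZ.
   assert (IZR (up ((T - tt O) / dl)) <= IZR (Z.of_nat (Z.to_nat (up ((T - tt O) / dl))))) by (apply IZR_le; lia).
   lra. }
 assert (Hm : exists m, T < tt m).
 { destruct (Hind n0) as [h|h]; auto. exists n0.
   assert (T - tt O < INR n0 * dl).
   { apply (Rmult_lt_compat_r dl) in Hn0; auto. unfold Rdiv in Hn0. rewrite Rmult_assoc, Rinv_l in Hn0; lra. }
   lra. }
 destruct Hm as [m Hm]. exists m. intros n Hn. unfold R_dist. rewrite Rminus_0_r.
 pose proof (EE_pos n). rewrite Rabs_right by lra.
 assert (T < tt (S n)) by (pose proof (tt_mono m (S n) ltac:(lia)); lra).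
 unfold EE. replace eps with (exp (- (aa * T))).
 apply exp_increasing. nra. unfold T. replace (- (aa * (- ln eps / aa))) with (ln eps) by (field; lra).
 apply exp_ln; lra.
Qed.

Lemma ind_sum : forall n, ssum ind n <= C0 / c1 * ssum EE n + 1.
Proof. intro n.
 assert (ssum ind n = IZR (Int_part (tt n)) - IZR (Int_part (tt O))).
 { unfold ind. apply (ssum_tele (fun j => IZR (Int_part (tt j)))). }
 rewrite H. pose proof (base_Int_part (tt n)). pose proof (base_Int_part (tt O)).
 assert (tt n - tt O <= C0 / c1 * ssum EE n).
 { rewrite <- (ssum_tele tt). replace (C0 / c1 * ssum EE n) with (ssum (fun j => C0/c1 * EE j + 0 * EE j) n)
     by (rewrite ssum_lin; ring).
   apply ssum_le. intro j. pose proof (tstep1 j) as [_ h]. pose proof C0_pos. pose proof (EE_pos j).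
   pose proof (ln1p_le (C0 * EE j) ltac:(nra)).
   apply (Rmult_le_reg_l c1); auto. replace (c1 * (C0 / c1 * EE j + 0 * EE j)) with (C0 * EE j) by (field; lra). lra. }
 lra. Qed.

Lemma Psi_avg : Un_cv (fun n => Psi aa (tt n) / INR n) (C0 * pp).
Proof. pose proof C0_pos.
 assert (H1 : Un_cv (fun n => ssum dd n / INR n) (C0 * pp)).
 { apply (cesaro_gen dd EE ind (C0 * pp) A1 B1 (C0 / c1)).
   - unfold A1. pose proof pp_pos. apply Rmult_le_pos; [lra|]. nra.
   - unfold B1. pose proof pp_pos. assert (0 < bc aa) by (unfold bc; pose proof ln2_pos; pose proof aa_pos; lra).
     assert (0 <= 2 * bc aa * C0 / c1) by (unfold Rdiv; apply Rmult_le_pos; [nra| left; apply Rinv_0_lt_compat; lra]). nra.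
   - unfold Rdiv; apply Rmult_le_pos; [lra| left; apply Rinv_0_lt_compat; lra].
   - intro j. pose proof (EE_pos j). lra.
   - apply EE_cv.
   - apply dd_bound.
   - apply ind_sum. }
 assert (H2 : Un_cv (fun n => Psi aa (tt O) / INR n) 0).
 { intros eps He. destruct (inv_INR_small (eps / (Rabs (Psi aa (tt O)) + 1))) as [N HN].
   apply Rdiv_lt_0_compat; [lra| pose proof (Rabs_pos (Psi aa (tt O))); lra].
   exists (S N). intros n Hn. specialize (HN n ltac:(lia)). unfold R_dist. rewrite Rminus_0_r.
   assert (0 < INR n) by (apply lt_0_INR; lia). unfold Rdiv. rewrite Rabs_mult, (Rabs_right (/ INR n)) by (apply Rle_ge; left; apply Rinv_0_lt_compat; lra).
   pose proof (Rabs_pos (Psi aa (tt O))).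
   apply Rle_lt_trans with ((Rabs (Psi aa (tt O)) + 1) * / INR n).
   apply Rmult_le_compat_r; [left; apply Rinv_0_lt_compat; lra| lra].
   apply (Rmult_lt_compat_l (Rabs (Psi aa (tt O)) + 1)) in HN; [|lra].
   replace ((Rabs (Psi aa (tt O)) + 1) * (eps / (Rabs (Psi aa (tt O)) + 1))) with eps in HN by (field; lra). lra. }
 pose proof (CV_plus _ _ _ _ H1 H2) as H3. rewrite Rplus_0_r in H3.
 intros eps He. destruct (H3 eps He) as [N HN]. exists (S N). intros n Hn. specialize (HN n ltac:(lia)).
 assert (0 < INR n) by (apply lt_0_INR; lia).
 replace (Psi aa (tt n) / INR n) with (ssum dd n / INR n + Psi aa (tt O) / INR n); auto.
 unfold dd. rewrite (ssum_tele (fun j => Psi aa (tt j))). field. lra.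
Qed.

Lemma S_avg : Un_cv (fun n => ssum (fun j => M1 C0 c1 (x (S j))) n / INR n - exp (aa * tt n) / alpha / INR n) 0.
Proof. pose proof C0_pos.
 assert (H1 : Un_cv (fun n => ssum DD n / INR n) 0).
 { apply (cesaro_gen DD EE ind 0 A2 B2 (C0 / c1)).
   - unfold A2. apply Rmult_le_pos. unfold Rdiv; apply Rmult_le_pos; [lra| left; apply Rinv_0_lt_compat; lra]. nra.
   - unfold B2. lra.
   - unfold Rdiv; apply Rmult_le_pos; [lra| left; apply Rinv_0_lt_compat; lra].
   - intro j. pose proof (EE_pos j). lra.
   - apply EE_cv.
   - intro j. rewrite Rminus_0_r. apply DD_bound.
   - apply ind_sum. }
 set (K0 := exp (aa * tt O) / alpha).
 assert (H2 : Un_cv (fun n => K0 / INR n) 0).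
 { intros eps He. destruct (inv_INR_small (eps / (Rabs K0 + 1))) as [N HN].
   apply Rdiv_lt_0_compat; [lra| pose proof (Rabs_pos K0); lra].
   exists (S N). intros n Hn. specialize (HN n ltac:(lia)). unfold R_dist. rewrite Rminus_0_r.
   assert (0 < INR n) by (apply lt_0_INR; lia). unfold Rdiv. rewrite Rabs_mult, (Rabs_right (/ INR n)) by (apply Rle_ge; left; apply Rinv_0_lt_compat; lra).
   pose proof (Rabs_pos K0).
   apply Rle_lt_trans with ((Rabs K0 + 1) * / INR n).
   apply Rmult_le_compat_r; [left; apply Rinv_0_lt_compat; lra| lra].
   apply (Rmult_lt_compat_l (Rabs K0 + 1)) in HN; [|lra].
   replace ((Rabs K0 + 1) * (eps / (Rabs K0 + 1))) with eps in HN by (field; lra). lra. }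
 pose proof (CV_plus _ _ _ _ H1 H2) as H3. rewrite Rplus_0_r in H3.
 intros eps He. destruct (H3 eps He) as [N HN]. exists (S N). intros n Hn. specialize (HN n ltac:(lia)).
 assert (0 < INR n) by (apply lt_0_INR; lia).
 unfold R_dist in *. rewrite Rminus_0_r in *.
 replace (ssum (fun j => M1 C0 c1 (x (S j))) n / INR n - exp (aa * tt n) / alpha / INR n)
   with (- (ssum DD n / INR n + K0 / INR n)). rewrite Rabs_Ropp. auto.
 assert (Hs : ssum (fun j => M1 C0 c1 (x (S j))) n = (exp (aa * tt n) - exp (aa * tt O)) / alpha - ssum DD n).
 { unfold DD. clear -Halpha. induction n. simpl. field. lra. cbn [ssum]. rewrite IHn. field. lra. }
 rewrite Hs. unfold K0. field. lra.
Qed.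

End Orbit.

Lemma cv_sub_gen : forall (u : nat -> R) L (w : nat -> nat), Un_cv u L ->
  (forall N, exists K, forall k, (K <= k)%nat -> (N <= w k)%nat) -> Un_cv (fun k => u (w k)) L.
Proof. intros u L w Hu Hw eps He. destruct (Hu eps He) as [N HN]. destruct (Hw N) as [K HK].
 exists K. intros k Hk. apply HN. apply HK. auto. Qed.

Lemma cv_shift : forall (u : nat -> R) L, Un_cv u L -> Un_cv (fun k => u (S k)) L.
Proof. intros u L Hu eps He. destruct (Hu eps He) as [N HN]. exists N. intros. apply HN. lia. Qed.

Lemma inv_cv1 : forall u : nat -> R, Un_cv u 1 -> (forall k, 0 < u k) -> Un_cv (fun k => / u k) 1.
Proof. intros u Hu Hp eps He. destruct (Hu (Rmin (1/2) (eps/2))) as [N HN].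
 apply Rmin_pos; lra. exists N. intros n Hn. specialize (HN n Hn). unfold R_dist in *.
 pose proof (Rmin_l (1/2) (eps/2)). pose proof (Rmin_r (1/2) (eps/2)).
 apply Rabs_def2 in HN. destruct HN. pose proof (Hp n).
 replace (/ u n - 1) with ((1 - u n) / u n) by (field; lra).
 unfold Rdiv. rewrite Rabs_mult, Rabs_inv. rewrite (Rabs_right (u n)) by lra.
 assert (Rabs (1 - u n) < eps / 2) by (apply Rabs_def1; lra).
 assert (/ u n < 2). { replace 2 with (/ (1/2)) by field. apply Rinv_lt_contravar; nra. }
 assert (0 < / u n) by (apply Rinv_0_lt_compat; lra).
 pose proof (Rabs_pos (1 - u n)). nra. Qed.

Lemma pow_exp_INR : forall a k, exp a ^ k = exp (a * INR k).
Proof. intros a k. induction k. simpl. rewrite Rmult_0_r, exp_0. reflexivity.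
 rewrite <- tech_pow_Rmult, IHk, S_INR, <- exp_plus. f_equal. ring. Qed.

Section Final.
Variable a : R.
Hypothesis Ha : 0 < a.
Definition PP (k : nat) := exp (a * INR k).

Lemma PP_ge : forall k, 1 + a * INR k <= PP k.
Proof. intro k. unfold PP. apply exp_ineq1_le. Qed.

Lemma PP_pos : forall k, 0 < PP k.
Proof. intro. unfold PP. apply exp_pos. Qed.

Lemma wk_bounds : forall k, PP k - 1 < INR (wk (exp a) k) <= PP k /\ (1 <= wk (exp a) k)%nat.
Proof. intro k. unfold wk. rewrite pow_exp_INR. fold (PP k).
 pose proof (base_Int_part (PP k)) as [h1 h2]. pose proof (PP_ge k). pose proof (pos_INR k).
 assert (0 < a * INR k + 1) by nra.
 assert (Hz : (0 < Int_part (PP k))%Z) by (apply lt_IZR; simpl; nra).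
 rewrite INR_IZR_INZ. replace (Z.of_nat (Z.to_nat (Int_part (PP k)))) with (Int_part (PP k)) by lia.
 split. split; lra. lia. Qed.

Lemma PP_inv_small : forall eps, 0 < eps -> exists N, forall k, (N <= k)%nat -> / PP k < eps.
Proof. intros eps He. destruct (inv_INR_small (eps * a)) as [N HN]. nra.
 exists (S N). intros k Hk. specialize (HN k ltac:(lia)).
 assert (0 < INR k) by (apply lt_0_INR; lia). pose proof (PP_ge k).
 apply Rle_lt_trans with (/ (a * INR k)). apply Rinv_le_contravar; nra.
 rewrite Rinv_mult. apply (Rmult_lt_reg_l a); auto.
 replace (a * (/ a * / INR k)) with (/ INR k) by (field; lra). nra. Qed.

Lemma ratio_cv : Un_cv (fun k => INR (wk (exp a) k) / PP k) 1.
Proof. intros eps He. destruct (PP_inv_small eps He) as [N HN]. exists N. intros k Hk.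
 specialize (HN k Hk). unfold R_dist. pose proof (wk_bounds k) as [[h1 h2] _]. pose proof (PP_pos k).
 replace (INR (wk (exp a) k) / PP k - 1) with ((INR (wk (exp a) k) - PP k) * / PP k) by (field; lra).
 rewrite Rabs_mult, (Rabs_right (/ PP k)) by (apply Rle_ge; left; apply Rinv_0_lt_compat; lra).
 assert (Rabs (INR (wk (exp a) k) - PP k) <= 1) by (apply Rabs_le; lra).
 assert (0 < / PP k) by (apply Rinv_0_lt_compat; lra). nra. Qed.

Lemma wk_inf : forall N, exists K, forall k, (K <= k)%nat -> (N <= wk (exp a) k)%nat.
Proof. intro N. destruct (archimed (INR N / a)) as [h _].
 exists (Z.to_nat (up (INR N / a))). intros k Hk.
 assert (IZR (up (INR N / a)) <= INR k).
 { apply Rle_trans with (INR (Z.to_nat (up (INR N / a)))).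
   rewrite (INR_IZR_INZ (Z.to_nat _)). apply IZR_le. lia. apply le_INR; auto. }
 pose proof (wk_bounds k) as [[h1 _] _]. pose proof (PP_ge k).
 assert (INR N <= a * INR k).
 { apply (Rmult_lt_compat_l a) in h; auto. replace (a * (INR N / a)) with (INR N) in h by (field; lra). nra. }
 assert (INR N < INR (wk (exp a) k)) by lra. apply INR_lt in H2. lia. Qed.

End Final.

Theorem proposition4p3 (alpha c1 C0 : R) (x : nat -> R)
  (Halpha : 0 < alpha < 1) (Hc1 : 0 < c1)
  (HC0 : left_lim (fM alpha C0 c1) (1/2) 1)
  (Hx : is_orbit_seq alpha C0 c1 x) :
  let c := exp (alpha * c1) in
  Un_cv (fun k => INR (wk c (S k)) / INR (wk c k)) c /\
  exists zeta : R, Un_cv (fun k => M0 C0 c1 x (wk c k)) zeta.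
Proof.
 intro c. set (a := alpha * c1). assert (Ha : 0 < a) by (unfold a; nra).
 assert (Hc : c = exp a) by reflexivity. rewrite Hc. clear Hc c.
 pose proof (ratio_cv a Ha) as Hr.
 assert (Hrpos : forall k, 0 < INR (wk (exp a) k) / PP a k).
 { intro k. pose proof (wk_bounds a Ha k) as [_ h]. pose proof (PP_pos a k).
   apply Rdiv_lt_0_compat; auto. apply lt_0_INR; lia. }
 pose proof (inv_cv1 _ Hr Hrpos) as Hri.
 split.
 - pose proof (CV_mult _ _ _ _ (cv_shift _ _ Hr) Hri) as H.
   intros eps He. destruct (H (eps / exp a)) as [N HN].
   { apply Rdiv_lt_0_compat; auto; apply exp_pos. }
   exists N. intros k Hk. specialize (HN k Hk). unfold R_dist in *.
   pose proof (wk_bounds a Ha k) as [_ h]. pose proof (wk_bounds a Ha (S k)) as [_ h'].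
   assert (0 < INR (wk (exp a) k)) by (apply lt_0_INR; lia).
   pose proof (PP_pos a k). pose proof (exp_pos a).
   assert (PP a (S k) = PP a k * exp a) by (unfold PP; rewrite S_INR, <- exp_plus; f_equal; ring).
   replace (INR (wk (exp a) (S k)) / INR (wk (exp a) k) - exp a) with
     (exp a * (INR (wk (exp a) (S k)) / PP a (S k) * / (INR (wk (exp a) k) / PP a k) - 1 * 1)).
   rewrite Rabs_mult, Rabs_right by lra.
   apply (Rmult_lt_compat_l (exp a)) in HN; auto. replace (exp a * (eps / exp a)) with eps in HN by (field; lra). lra.
   rewrite H3. field. repeat split; lra.
 -
   pose proof (Psi_avg alpha c1 C0 x Halpha Hc1 HC0 Hx) as HPsi.
   pose proof (S_avg alpha c1 C0 x Halpha Hc1 HC0 Hx) as HS.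
   change (aa alpha c1) with a in HPsi, HS.
   set (w := wk (exp a)). set (T := tt c1 x).
   pose proof (cv_sub_gen _ _ w HPsi (wk_inf a Ha)) as HPsiw.
   set (Q := fun k => Psi a (T (w k)) / PP a k).
   assert (HQ : Un_cv Q (C0 * pp alpha c1)).
   { pose proof (CV_mult _ _ _ _ HPsiw Hr) as H. rewrite Rmult_1_r in H.
     intros eps He. destruct (H eps He) as [N HN]. exists N. intros k Hk. specialize (HN k Hk).
     unfold Q. pose proof (wk_bounds a Ha k) as [_ h]. pose proof (PP_pos a k).
     assert (0 < INR (w k)) by (apply lt_0_INR; unfold w; lia).
     replace (Psi a (T (w k)) / PP a k) with (Psi a (T (w k)) / INR (w k) * (INR (wk (exp a) k) / PP a k)); auto.
     unfold w in *. field. split; lra. }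
   set (r := fun k => exp (a * T (w k)) / PP a k).
   assert (Hrq : forall n m, (m <= n)%nat -> Rabs (r n - r m) <= Rabs (Q n - Q m)).
   { intros n m Hnm. set (d := (n - m)%nat). set (t2 := T (w m) + IZR (Z.of_nat d)).
     assert (HPn : PP a n = PP a m * exp (a * INR d)).
     { unfold PP. rewrite <- exp_plus. f_equal. unfold d. rewrite minus_INR by auto. ring. }
     assert (He2 : exp (a * t2) = exp (a * T (w m)) * exp (a * INR d)).
     { unfold t2. rewrite <- exp_plus. f_equal. rewrite <- INR_IZR_INZ. ring. }
     assert (Hp2 : Psi a t2 = exp (a * INR d) * Psi a (T (w m))).
     { unfold t2. rewrite Psi_shift. rewrite <- INR_IZR_INZ. reflexivity. }
     pose proof (Psi_lip a Ha (T (w n)) t2) as HL.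
     pose proof (PP_pos a m). pose proof (exp_pos (a * INR d)).
     assert (E1 : r n - r m = (exp (a * T (w n)) - exp (a * t2)) / PP a n).
     { unfold r. rewrite HPn, He2. field. split; lra. }
     assert (E2 : Q n - Q m = (Psi a (T (w n)) - Psi a t2) / PP a n).
     { unfold Q. rewrite HPn, Hp2. field. split; lra. }
     rewrite E1, E2. unfold Rdiv. rewrite !Rabs_mult.
     apply Rmult_le_compat_r. apply Rabs_pos. auto. }
   assert (Hcau : Cauchy_crit r).
   { pose proof (CV_Cauchy Q (exist _ _ HQ)) as HC. intros eps He. destruct (HC eps He) as [N HN].
     exists N. intros n m Hn Hm. unfold R_dist in *. destruct (le_lt_dec m n) as [h|h].
     - eapply Rle_lt_trans. apply Hrq; auto. apply HN; auto.
     - rewrite Rabs_minus_sym. eapply Rle_lt_trans. apply Hrq; lia. rewrite Rabs_minus_sym. apply HN; auto. }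
   destruct (R_complete r Hcau) as [rho Hrho].
   exists (rho / alpha).
   pose proof (cv_sub_gen _ _ w HS (wk_inf a Ha)) as HSw.
   pose proof (CV_mult _ _ _ _ Hrho Hri) as H1.
   assert (H2 : Un_cv (fun k => r k * / (INR (wk (exp a) k) / PP a k) / alpha) (rho * 1 / alpha)).
   { intros eps He. destruct (H1 (eps * alpha)) as [N HN]. nra. exists N. intros k Hk. specialize (HN k Hk).
     unfold R_dist in *. revert HN. generalize (r k * / (INR (wk (exp a) k) / PP a k)). intros z HN.
     replace (z / alpha - rho * 1 / alpha) with ((z - rho * 1) * / alpha) by (field; lra).
     rewrite Rabs_mult, (Rabs_right (/ alpha)) by (apply Rle_ge; left; apply Rinv_0_lt_compat; lra).
     apply (Rmult_lt_reg_r alpha); [lra|]. rewrite Rmult_assoc, Rinv_l, Rmult_1_r; lra. }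
   pose proof (CV_plus _ _ _ _ HSw H2) as H3. rewrite Rplus_0_l, Rmult_1_r in H3.
   intros eps He. destruct (H3 eps He) as [N HN]. exists N. intros k Hk. specialize (HN k Hk).
   unfold R_dist in *.
   pose proof (wk_bounds a Ha k) as [_ h]. pose proof (PP_pos a k).
   assert (0 < INR (w k)) by (apply lt_0_INR; unfold w; lia).
   assert (Heq : M0 C0 c1 x (w k) =
    ssum (fun j => M1 C0 c1 (x (S j))) (w k) / INR (w k) - exp (a * tt c1 x (w k)) / alpha / INR (w k) +
     r k * / (INR (wk (exp a) k) / PP a k) / alpha).
   { unfold M0. fold w. rewrite ssum_sumf by (unfold w; lia). unfold r, T. fold w. field. unfold w in *. repeat split; lra. }
   rewrite Heq. exact HN.
Qed.
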